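(* For every prime $p$ and every integer $q$ coprime to $p$, $$|\mathrm{def}(p;q,1)|\le |\mathrm{def}(p;1,1)|=\tfrac13(p-1)(p-2).$$
   Context: For $z\in\mathbb{R}$ define $((z))=z-[z]-\tfrac12$ if $z\notin\mathbb{Z}$ and $((z))=0$ if $z\in\mathbb{Z}$, where $[z]$ is the greatest integer $\le z$. For $q$ coprime to $p$ define $$\mathrm{def}(p;q,1)=-4p\sum_{k=0}^{p-1}\left(\left(\frac{k}{p}\right)\right)\left(\left(\frac{qk}{p}\right)\right).$$ *)

(* Defs.v *)
From HB Require Import structures.
From mathcomp Require Import all_boot all_order all_algebra.
Set Implicit Arguments. Unset Strict Implicit. Unset Printing Implicit Defensive.
Import Order.TTheory GRing.Theory Num.Theory.
Local Open Scope ring_scope.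

Definition sawtooth (z : rat) : rat :=
  if z \is a Num.int then 0 else z - (Num.floor z)%:~R - 2^-1.

Definition defpq (p : nat) (q : int) : rat :=
  - (4 * p%:R) * \sum_(0 <= k < p)
      sawtooth (k%:R / p%:R) * sawtooth ((q * k%:Z)%:~R / p%:R).

(* Main.v *)
Require Import Defs.
From HB Require Import structures.
From mathcomp Require Import all_boot all_order all_algebra.
From mathcomp Require Import ring lra zify.
Import Order.TTheory GRing.Theory Num.Theory.
Local Open Scope ring_scope.

Definition fr (p : nat) (r : int) : rat :=
  if r == 0 then 0 else r%:~R / p%:R - 2^-1.

Lemma saw_mod (p : nat) (m : int) : (0 < p)%N ->
  sawtooth (m%:~R / p%:R) = fr p (m %% p)%Z.
Proof.
move=> p0.
have pz : (p%:Z != 0) by lia.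
have pR : (p%:R : rat) != 0 by rewrite pnatr_eq0 -lt0n.
have pR0 : (0 : rat) < p%:R by rewrite ltr0n.
set d := (m %/ p)%Z; set r := (m %% p)%Z.
have r0 : 0 <= r by apply: modz_ge0.
have rp : r < p%:Z by apply: ltz_pmod; rewrite ltz_nat.
have E : (m%:~R / p%:R : rat) = d%:~R + r%:~R / p%:R.
  rewrite {1}(divz_eq m p) -/d -/r rmorphD rmorphM /= mulrDl.
  by rewrite -[(p%:Z)%:~R]/(p%:R : rat) mulfK.
rewrite /sawtooth /fr E.
clearbody d r.
have [->|rn0] := eqVneq r 0.
  by rewrite mul0r addr0 rpred_int.
have rpos : (0 : rat) < r%:~R / p%:R.
  by rewrite divr_gt0 // ltr0z lt_neqAle eq_sym rn0.
have rlt : r%:~R / p%:R < (1 : rat).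
  by rewrite ltr_pdivrMr // mul1r -[p%:R]/((p%:Z)%:~R : rat) ltr_int.
have F : Num.floor (d%:~R + r%:~R / p%:R : rat) = d.
  apply: floor_def; rewrite rmorphD /=.
  by apply/andP; split; [rewrite lerDl ltW | rewrite ltrD2l].
case: ifP => [H|_].
  move: H; rewrite intrEfloor F => /eqP H.
  have : r%:~R / p%:R == (0:rat) by rewrite -(inj_eq (addrI (d%:~R))) addr0 -H.
  by rewrite mulf_eq0 invr_eq0 (negPf pR) orbF intr_eq0 (negPf rn0).
by rewrite F; ring.
Qed.
Lemma sumsq (P : rat) n : P != 0 ->
  \sum_(i < n) ((i.+1)%:R / P - 2^-1) ^+ 2 =
  n%:R * (n.+1)%:R * (2 * n%:R + 1) / (6 * P ^+ 2)
  - n%:R * (n.+1)%:R / (2 * P) + n%:R / 4.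
Proof.
move=> P0; elim: n => [|n IH]; first by rewrite big_ord0; field.
rewrite big_ord_recr /= IH -!natr1; field.
by rewrite P0.
Qed.

Lemma normM2 (x y : rat) : `|x * y| <= (x ^+ 2 + y ^+ 2) / 2.
Proof.
rewrite normrM -[x ^+ 2](real_normK (num_real x)) -[y ^+ 2](real_normK (num_real y)).
have := normr_ge0 x; have := normr_ge0 y.
move: `|x| `|y| => a b ha hb.
have := sqr_ge0 (a - b); rewrite !expr2; lra.
Qed.

Lemma perm_bound n (a : 'I_n -> rat) (g : 'I_n -> 'I_n) : injective g ->
  `|\sum_(i < n) a i * a (g i)| <= \sum_(i < n) a i * a i.
Proof.
move=> ig.
apply: (le_trans (ler_norm_sum _ _ _)).
apply: (@le_trans _ _ (\sum_(i < n) (a i ^+ 2 + a (g i) ^+ 2) / 2)).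
  by apply: ler_sum => i _; apply: normM2.
have R : \sum_(i < n) a (g i) ^+ 2 = \sum_(i < n) a i ^+ 2.
  by rewrite [RHS](reindex_inj ig).
rewrite -mulr_suml big_split /= R.
rewrite -big_split /= mulr_suml; apply: ler_sum => i _.
by rewrite expr2; lra.
Qed.

Lemma defpq_sum (p : nat) (q : int) : (0 < p)%N ->
  defpq p q = - (4 * p%:R) *
    \sum_(i < p) fr p i * fr p ((q * i%:Z) %% p)%Z.
Proof.
move=> p0; rewrite /defpq big_mkord; congr (_ * _); apply: eq_bigr => i _.
rewrite -[(i%:R : rat)]/((i%:Z)%:~R : rat) !saw_mod // modz_small //.
by apply/andP; split => //; rewrite ltz_nat ltn_ord.
Qed.

Theorem mainTheorem3 (p : nat) (q : int) :
  prime p -> coprimez q p%:Z ->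
  `|defpq p q| <= `|defpq p 1| /\
  `|defpq p 1| = 3^-1 * (p%:R - 1) * (p%:R - 2).
Proof.
move=> pp cq.
have p1 : (1 < p)%N := prime_gt1 pp.
have p0 : (0 < p)%N by lia.
have pz : p%:Z != 0 by lia.
have ltg : forall i : 'I_p, (`|(q * i%:Z) %% p|%Z < p)%N.
  move=> i; rewrite -ltz_nat gez0_abs ?modz_ge0 // ltz_pmod //.
pose g (i : 'I_p) : 'I_p := Ordinal (ltg i).
have gE : forall i, (g i)%:Z = ((q * i%:Z) %% p)%Z.
  by move=> i; rewrite /= gez0_abs ?modz_ge0.
have ig : injective g.
  move=> i j /(congr1 (fun k : 'I_p => (k : nat)%:Z)); rewrite !gE => /eqP.
  rewrite eqz_mod_dvd -mulrBr Gauss_dvdzr; last by rewrite coprimez_sym.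
  rewrite -eqz_mod_dvd !modz_small; first by move=> /eqP [] /val_inj.
  - by apply/andP; split => //; rewrite ltz_nat ltn_ord.
  - by apply/andP; split => //; rewrite ltz_nat ltn_ord.
pose a (i : 'I_p) := fr p i.
have Dq : defpq p q = - (4 * p%:R) * \sum_(i < p) a i * a (g i).
  by rewrite defpq_sum //; congr (_ * _); apply: eq_bigr => i _; rewrite /a gE.
have D1 : defpq p 1 = - (4 * p%:R) * \sum_(i < p) a i * a i.
  rewrite defpq_sum //; congr (_ * _); apply: eq_bigr => i _.
  by rewrite mul1r modz_small // ltz_nat ltn_ord.
have pR : (0 : rat) < p%:R by rewrite ltr0n.
have ge0 : 0 <= \sum_(i < p) a i * a i by apply: sumr_ge0 => i _; rewrite -expr2 sqr_ge0.
split.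
  rewrite Dq D1 !normrM; apply: ler_wpM2l; first exact: normr_ge0.
  by rewrite (ger0_norm ge0); apply: perm_bound.
rewrite /a in D1; move: D1 p1; clear.
case: p => [//|n] D1 n1.
rewrite D1 big_ord_recl /fr /= mul0r add0r.
have E : \sum_(i < n) fr n.+1 (bump 0 i) * fr n.+1 (bump 0 i) =
         \sum_(i < n) ((i.+1)%:R / (n.+1)%:R - 2^-1) ^+ 2.
  apply: eq_bigr => i _; rewrite /fr /bump /= add1n expr2.
  by [].
rewrite E sumsq ?pnatr_eq0 //.
have nR : (1 : rat) <= n%:R by rewrite ler1n; lia.
rewrite -!natr1.
set N := (n%:R : rat).
have -> : - (4 * (N + 1)) *
  (N * (N + 1) * (2 * N + 1) / (6 * (N + 1) ^+ 2) -
   N * (N + 1) / (2 * (N + 1)) + N / 4) = - (3^-1 * (N + 1 - 1) * (N + 1 - 2)).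
  by field; lra.
rewrite normrN ger0_norm //.
apply: mulr_ge0; first apply: mulr_ge0; lra.
Qed.
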